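(* Let $\mathcal X,\mathcal Y,\mathcal Z$ be finite sets, $\rho$ a probability distribution on $\mathcal X$, $\mathsf E:\mathcal Y\to\mathcal Z$ a map, $\pi_0$ a reference policy with $\pi_0(y\mid x)>0$ for all $x,y$, and $\beta>0$. Let $\mathcal R:\Delta(\mathcal Z)\to\mathbb R$ be convex and lower semi-continuous. Then: (1) For every policy $\pi\in\Delta(\mathcal Y)^{\mathcal X}$, $$\mathcal J(\pi)=\sup_{\mathsf q}\ \mathcal G(\pi,\mathsf q),$$ where the supremum ranges over all families $\mathsf q=(\mathsf q(\cdot\mid x))_{x\in\mathcal X}$ with each $\mathsf q(\cdot\mid x)$ in the interior of $\Delta(\mathcal Z)$. Consequently, for every nonempty set $\Pi\subseteq\Delta(\mathcal Y)^{\mathcal X}$, $\inf_{\pi\in\Pi}\mathcal J(\pi)=\inf_{\pi\in\Pi}\sup_{\mathsf q}\mathcal G(\pi,\mathsf q)$. (2) For a fixed target family $\mathsf q$ (each $\mathsf q(\cdot\mid x)$ in the interior of $\Delta(\mathcal Z)$), define $\tilde{\mathsf q}(y\mid x)=\pi_0(y\mid x)\,\mathsf q(\mathsf E(y)\mid x)/C_x$ with $C_x=\sum_{y'}\pi_0(y'\mid x)\mathsf q(\mathsf E(y')\mid x)$. Then for every $\pi$, $$\mathcal G(\pi,\mathsf q)=\beta\,\mathbb E_{x\sim\rho}\big[\mathrm{D_{KL}}(\pi(\cdot\mid x)\,\|\,\tilde{\mathsf q}(\cdot\mid x))\big]+\kappa(\mathsf q),$$ where $\kappa(\mathsf q)$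 does not depend on $\pi$. In particular, over $\Pi=\Delta(\mathcal Y)^{\mathcal X}$, the minimizer of $\pi\mapsto\mathcal G(\pi,\mathsf q)$ is $\pi^*(y\mid x)\propto\pi_0(y\mid x)\,\mathsf q(\mathsf E(y)\mid x)$, unique on every $x$ with $\rho(x)>0$.
   Context: A policy $\pi\in\Delta(\mathcal Y)^{\mathcal X}$ is a family of conditional distributions $\pi(\cdot\mid x)$ on $\mathcal Y$. Its induced answer marginal is $\nu_\pi(z\mid x)=\sum_{y\in\mathsf E^{-1}(z)}\pi(y\mid x)$. The primal objective is $\mathcal J(\pi)=\mathbb E_{x\sim\rho}\big[\mathcal R(\nu_\pi(\cdot\mid x))+\beta\,\mathrm{D_{KL}}(\pi(\cdot\mid x)\|\pi_0(\cdot\mid x))\big]$. The Fenchel conjugate is $\mathcal R^*(u)=\sup_{\nu\in\Delta(\mathcal Z)}\{\langle\nu,u\rangle-\mathcal R(\nu)\}$ for $u\in\mathbb R^{\mathcal Z}$, and for $\mathsf q$ in the interior of $\Delta(\mathcal Z)$ set $\Psi(\mathsf q)=\mathcal R^*(-\beta\log\mathsf q)$ (log taken coordinatewise). The game objective is $$\mathcal G(\pi,\mathsf q)=\mathbb E_{x\sim\rho}\Big[\beta\,\mathrm{D_{KL}}(\pi(\cdot\mid x)\|\pi_0(\cdot\mid x))-\beta\,\mathbb E_{y\sim\pi(\cdot\mid x)}[\log\mathsf q(\mathsf E(y)\mid x)]-\Psi(\mathsf q(\cdot\mid x))\Big].$$ *)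

(* Defs.v *)
From HB Require Import structures.
From mathcomp Require Import all_boot all_order all_algebra.
From mathcomp Require Import all_classical all_reals all_analysis.
Set Implicit Arguments. Unset Strict Implicit. Unset Printing Implicit Defensive.
Import Order.TTheory GRing.Theory Num.Theory.
Local Open Scope classical_set_scope.
Local Open Scope ring_scope.

Section Defs.
Variable R : realType.

Definition simplex (T : finType) (p : T -> R) : Prop :=
  (forall t, 0 <= p t) /\ \sum_t p t = 1.

Definition int_simplex (T : finType) (p : T -> R) : Prop :=
  (forall t, 0 < p t) /\ \sum_t p t = 1.

Definition is_policy (X Y : finType) (pi : X -> Y -> R) : Prop :=
  forall x, simplex (pi x).

Definition is_target (X Z : finType) (q : X -> Z -> R) : Prop :=
  forall x, int_simplex (q x).

Definition marginal (X Y Z : finType) (E : Y -> Z) (pi : X -> Y -> R)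
  (x : X) : Z -> R := fun z => \sum_(y | E y == z) pi x y.

Definition KL (Y : finType) (p q : Y -> R) : R :=
  \sum_y (if p y == 0 then 0 else p y * ln (p y / q y)).

Definition Ex (X : finType) (rho : X -> R) (f : X -> R) : R :=
  \sum_x rho x * f x.

Definition convex_on_simplex (Z : finType) (Rf : (Z -> R) -> R) : Prop :=
  forall (nu1 nu2 : Z -> R) (t : R), simplex nu1 -> simplex nu2 ->
    0 <= t <= 1 ->
    Rf (fun z => t * nu1 z + (1 - t) * nu2 z) <= t * Rf nu1 + (1 - t) * Rf nu2.

(* lower semicontinuity of Rf on Delta(Z) (topology of R^Z restricted to
   the simplex; coordinatewise distance = sup-norm) *)
Definition lsc_on_simplex (Z : finType) (Rf : (Z -> R) -> R) : Prop :=
  forall nu : Z -> R, simplex nu ->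
    forall e : R, 0 < e -> exists2 d : R, 0 < d &
      forall mu : Z -> R, simplex mu -> (forall z, `|mu z - nu z| < d) ->
        Rf nu - e < Rf mu.

Definition fconj (Z : finType) (Rf : (Z -> R) -> R) (u : Z -> R) : R :=
  sup [set r | exists nu : Z -> R, simplex nu /\ r = \sum_z nu z * u z - Rf nu].

Definition Psi (Z : finType) (Rf : (Z -> R) -> R) (beta : R) (q : Z -> R) : R :=
  fconj Rf (fun z => - (beta * ln (q z))).

Definition Jobj (X Y Z : finType) (rho : X -> R) (E : Y -> Z)
  (pi0 : X -> Y -> R) (beta : R) (Rf : (Z -> R) -> R) (pi : X -> Y -> R) : R :=
  Ex rho (fun x => Rf (marginal E pi x) + beta * KL (pi x) (pi0 x)).

Definition Gobj (X Y Z : finType) (rho : X -> R) (E : Y -> Z)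
  (pi0 : X -> Y -> R) (beta : R) (Rf : (Z -> R) -> R)
  (pi : X -> Y -> R) (q : X -> Z -> R) : R :=
  Ex rho (fun x => beta * KL (pi x) (pi0 x)
                   - beta * (\sum_y pi x y * ln (q x (E y)))
                   - Psi Rf beta (q x)).

Definition Cnorm (X Y Z : finType) (E : Y -> Z) (pi0 : X -> Y -> R)
  (q : X -> Z -> R) (x : X) : R := \sum_y pi0 x y * q x (E y).

Definition qtilde (X Y Z : finType) (E : Y -> Z) (pi0 : X -> Y -> R)
  (q : X -> Z -> R) : X -> Y -> R :=
  fun x y => pi0 x y * q x (E y) / Cnorm E pi0 q x.

End Defs.

(* Main.v *)
Require Import Defs.
From HB Require Import structures.
From mathcomp Require Import all_boot all_order all_algebra.
From mathcomp Require Import all_classical all_reals all_analysis.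
From mathcomp Require Import ring lra.
Import Order.TTheory GRing.Theory Num.Theory.
Local Open Scope classical_set_scope.
Local Open Scope ring_scope.
Set Implicit Arguments. Unset Strict Implicit. Unset Printing Implicit Defensive.

Section Helpers.
Variable R : realType.

Lemma le_sum1 (T : finType) (F : T -> R) t :
  (forall t, 0 <= F t) -> F t <= \sum_t F t.
Proof.
move=> h; rewrite (bigD1 t) //= lerDl; exact: sumr_ge0.
Qed.

Lemma simplex_le1 (T : finType) (p : T -> R) t : simplex p -> p t <= 1.
Proof. by case=> h0 h1; rewrite -h1; exact: le_sum1. Qed.

Lemma sum_abs_bound (T : finType) (p u : T -> R) : simplex p ->
  \sum_t p t * u t <= \sum_t `|u t|.
Proof.
move=> hp; apply: ler_sum => t _.
have h0 := hp.1 t; have h1 : p t <= 1 by exact: simplex_le1.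
apply: (le_trans (ler_norm _)); rewrite normrM (ger0_norm h0).
by rewrite ler_piMl.
Qed.

Definition fset (Z : finType) (Rf : (Z -> R) -> R) (u : Z -> R) :=
  [set r | exists nu : Z -> R, simplex nu /\ r = \sum_z nu z * u z - Rf nu].

Lemma fconj_ge (Z : finType) (Rf : (Z -> R) -> R) (m : R) u nu :
  (forall mu, simplex mu -> m <= Rf mu) -> simplex nu ->
  \sum_z nu z * u z - Rf nu <= fconj Rf u.
Proof.
move=> hm hnu; rewrite /fconj.
have hs : has_sup (fset Rf u).
  split; first by exists (\sum_z nu z * u z - Rf nu); exists nu.
  exists (\sum_z `|u z| - m) => _ [mu [hmu ->]].
  apply: lerB; [exact: sum_abs_bound | exact: hm].
by apply: (sup_upper_bound hs); exists nu.
Qed.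

Lemma fconj_le (Z : finType) (Rf : (Z -> R) -> R) (u : Z -> R) (b : R) (nu0 : Z -> R) :
  simplex nu0 ->
  (forall mu, simplex mu -> \sum_z mu z * u z - Rf mu <= b) -> fconj Rf u <= b.
Proof.
move=> h0 hb; apply: ge_sup.
  by exists (\sum_z nu0 z * u z - Rf nu0); exists nu0.
by move=> _ [mu [hmu ->]]; exact: hb.
Qed.


Definition vtx (Z : finType) (z0 : Z) : Z -> R := fun w => if w == z0 then 1 else 0.

Lemma vtx_simplex (Z : finType) (z0 : Z) : simplex (vtx z0).
Proof.
split; first by move=> w; rewrite /vtx; case: ifP.
rewrite (bigD1 z0) //= /vtx eqxx big1 ?addr0 // => w /negbTE ->; done.
Qed.

Lemma simplex_ex (Z : finType) (mu : Z -> R) : simplex mu -> exists z, mu z != 0.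
Proof.
case=> _ h1; case: (boolP [exists z, mu z != 0]) => [/existsP//|/existsPn hn].
exfalso; move: h1; rewrite big1 => [/eqP|z _]; first by rewrite eq_sym oner_eq0.
by apply/eqP; rewrite -[_ == _]negbK hn.
Qed.

Lemma ub_conv (Z : finType) (Rf : (Z -> R) -> R) :
  convex_on_simplex Rf -> forall mu, simplex mu -> Rf mu <= \sum_z `|Rf (vtx z)|.
Proof.
move=> hc; pose M := \sum_z `|Rf (vtx z)|; rewrite -/M.
have hM z : Rf (vtx z) <= M.
  apply: le_trans (ler_norm _) _; rewrite /M.
  apply: (@le_sum1 _ (fun w => `|Rf (vtx w)|) z) => w; exact: normr_ge0.
suff H (n : nat) (mu : Z -> R) : simplex mu -> (#|[pred z | mu z != 0%R]| <= n)%N -> Rf mu <= M.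
  move=> mu hmu; exact: (H _ mu hmu (leqnn _)).
elim: n mu => [|n IH] mu hmu hcard; have [z0 hz0] := simplex_ex hmu.
  move: hcard; rewrite leqn0 => /eqP/card0_eq/(_ z0); rewrite !inE hz0 //.
have [h0 h1] := hmu.
set t := mu z0.
have t0 : 0 < t by rewrite lt0r hz0 h0.
have t1 : t <= 1 by exact: simplex_le1.
have hrest : t + \sum_(z | z != z0) mu z = 1 by rewrite -h1 [in RHS](bigD1 z0).
case: (eqVneq t 1) => [te1|tn1].
  have -> : mu = vtx z0.
    apply: boolp.funext => z; rewrite /vtx; case: eqP => [->//|/eqP hz].
    have hs : \sum_(z | z != z0) mu z = 0 by move: hrest; rewrite te1; lra.
    exact: (psumr_eq0P (fun i _ => h0 i) hs).
  exact: hM.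
have t1' : t < 1 by rewrite lt_neqAle tn1 t1.
have s0 : 0 < 1 - t by lra.
pose mu' := fun z => if z == z0 then 0 else mu z / (1 - t).
have hmu' : simplex mu'.
  split => [z|]; first by rewrite /mu'; case: ifP => // _; rewrite divr_ge0 // ltW.
  rewrite (bigD1 z0) //= /mu' eqxx add0r.
  rewrite (eq_bigr (fun z => mu z / (1 - t))) => [|z /negbTE -> //].
  rewrite -mulr_suml; have -> : \sum_(z | z != z0) mu z = 1 - t by lra.
  by rewrite divff // gt_eqF.
have hc' : (#|[pred z | mu' z != 0%R]| <= n)%N.
  have : (#|[pred z | mu z != 0%R]| = 1 + #|[predD1 [pred z | mu z != 0%R] & z0]|)%N.
    by rewrite (cardD1 z0) !inE hz0.
  move=> e; move: hcard; rewrite e ltnS => hle; apply: leq_trans hle.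
  apply: subset_leq_card; apply/fintype.subsetP => z; rewrite !inE /mu'.
  case: ifP => [_|hz]; first by rewrite eqxx.
  rewrite /=; apply: contra => /eqP ->; by rewrite mul0r.
have IH' := IH mu' hmu' hc'.
have -> : mu = (fun z => t * vtx z0 z + (1 - t) * mu' z).
  apply: boolp.funext => z; rewrite /vtx /mu'; case: eqP => [->|_].
    by rewrite mulr1 mulr0 addr0.
  by rewrite mulr0 add0r mulrC divfK // gt_eqF.
apply: le_trans (hc _ _ _ (vtx_simplex z0) hmu' _) _; first by rewrite ltW.
have := hM z0; have := IH'.
move=> a b; have : t * Rf (vtx z0) <= t * M by rewrite ler_wpM2l // ltW.
have : (1 - t) * Rf mu' <= (1 - t) * M by rewrite ler_wpM2l // ltW.
lra.
Qed.


Lemma lb_conv (Z : finType) (Rf : (Z -> R) -> R) (z0 : Z) :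
  convex_on_simplex Rf -> exists m, forall mu, simplex mu -> m <= Rf mu.
Proof.
move=> hc; pose M := \sum_z `|Rf (vtx z)|.
have hn : (0 < #|Z|)%N by apply/card_gt0P; exists z0.
pose s : R := (#|Z|%:R)^-1.
have s0 : 0 < s by rewrite invr_gt0 ltr0n.
have sn : \sum_(z : Z) s = 1.
  by rewrite sumr_const -mulr_natl /s mulfV // pnatr_eq0 -lt0n.
pose c : Z -> R := fun _ => s.
pose t := (1 + s)^-1.
have t0 : 0 < t by rewrite invr_gt0; lra.
have hts : t * s = 1 - t by rewrite /t; field; lra.
exists (((1 + s) * Rf c - M) / s) => mu hmu.
pose w := fun z => (1 + s) * s - s * mu z.
have hw : simplex w.
  split => [z|].
    have := simplex_le1 z hmu; rewrite /w => h; nra.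
  rewrite /w sumrB -mulr_sumr -mulr_sumr sn (proj2 hmu); lra.
have -> : c = (fun z => t * w z + (1 - t) * mu z).
  apply: boolp.funext => z; rewrite /c /w.
  rewrite /t; field; lra.
have t1 : t <= 1 by rewrite /t invf_le1; lra.
have t01 : 0 <= t <= 1 by rewrite (ltW t0) t1.
have hcv := hc w mu t hw hmu t01.
have hwM : Rf w <= M by exact: ub_conv.
have e1 : (1 + s) * t = 1 by rewrite /t mulfV //; lra.
rewrite ler_pdivrMr //.
set C := Rf _ in hcv *.
have : (1 + s) * C <= (1 + s) * (t * Rf w + (1 - t) * Rf mu) by rewrite ler_pM2l //; lra.
have -> : (1 + s) * (t * Rf w + (1 - t) * Rf mu) = Rf w + s * Rf mu.
  by rewrite mulrDr !mulrA e1 mulrBr e1 mulr1; ring.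
lra.
Qed.

End Helpers.

Section H2.
Variable R : realType.

Lemma simplex_comb (Z : finType) (p q : Z -> R) (s : R) :
  simplex p -> simplex q -> 0 <= s <= 1 -> simplex (fun z => s * p z + (1 - s) * q z).
Proof.
move=> [p0 p1] [q0 q1] /andP[s0 s1]; split => [z|].
  by apply: addr_ge0; apply: mulr_ge0 => //; lra.
by rewrite big_split /= -!mulr_sumr p1 q1; ring.
Qed.

Lemma fm_approx (Z : finType) (Rf : (Z -> R) -> R) (m : R) :
  convex_on_simplex Rf -> lsc_on_simplex Rf ->
  (forall mu, simplex mu -> m <= Rf mu) ->
  forall nu, simplex nu -> forall eps : R, 0 < eps ->
  exists u : Z -> R, Rf nu - eps <= \sum_z nu z * u z - fconj Rf u.
Proof.
move=> hc hl hm nu hnu eps e0.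
have e20 : 0 < eps / 2 by lra.
have [d d0 hd] := hl nu hnu (eps / 2) e20.
pose K := Rf nu + 1 - m.
have K0 : 0 < K by have := hm nu hnu; rewrite /K; lra.
pose t := 4 * K / d ^+ 2.
have d20 : 0 < d ^+ 2 by rewrite exprn_gt0.
have t0 : 0 < t by rewrite /t divr_gt0 //; lra.
have htd : t * d ^+ 2 = 4 * K by rewrite /t divfK // gt_eqF.
pose s := eps / (4 * t + eps).
have s0 : 0 < s by rewrite /s divr_gt0 //; lra.
have s1 : s <= 1 by rewrite /s ler_pdivrMr; lra.
have hts : t * s <= eps / 4.
  rewrite /s mulrA ler_pdivrMr; last lra.
  have : 0 <= eps * eps by nra.
  lra.
pose c := eps / (4 + 4 * eps).
have c0 : 0 < c by rewrite /c divr_gt0 //; lra.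
have c1 : c <= eps / 4 by rewrite /c ler_pdivrMr; nra.
have c2 : c < 1 by rewrite /c ltr_pdivrMr; lra.
pose dl := s * c.
have dl0 : 0 < dl by rewrite /dl mulr_gt0.
have dl1 : dl < 1 by rewrite /dl; nra.
pose phi := fun mu : Z -> R => Rf mu + t / 2 * \sum_z (mu z - nu z) ^+ 2.
have phi_ge mu : simplex mu -> Rf mu <= phi mu.
  move=> _; rewrite /phi lerDl mulr_ge0 //; first lra.
  by apply: sumr_ge0 => z _; exact: sqr_ge0.
pose S := [set r | exists mu, simplex mu /\ r = - phi mu].
have hS : has_sup S.
  split; first by exists (- phi nu); exists nu.
  exists (- m) => _ [mu [hmu ->]].
  have := hm mu hmu; have := phi_ge mu hmu; lra.
have [_ [mut [hmut ->]] hr] := sup_adherent dl0 hS.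
have hmin mu : simplex mu -> phi mut < phi mu + dl.
  move=> hmu; have : - phi mu <= sup S by apply: (sup_upper_bound hS); exists mu.
  lra.
have ha : Rf nu - eps / 2 < Rf mut.
  apply: hd => // z.
  have hnu0 : phi nu = Rf nu.
    by rewrite /phi big1 ?mulr0 ?addr0 // => w _; rewrite subrr expr0n.
  have := hmin nu hnu; rewrite hnu0 => h.
  have hmm := hm mut hmut.
  have hsq : (mut z - nu z) ^+ 2 <= \sum_z (mut z - nu z) ^+ 2.
    by apply: (@le_sum1 _ _ (fun w => (mut w - nu w) ^+ 2)) => w; exact: sqr_ge0.
  have hA : t / 2 * \sum_z (mut z - nu z) ^+ 2 < K by move: h; rewrite /phi /K; lra.
  have h2 : t * (mut z - nu z) ^+ 2 < 2 * K.
    have : t / 2 * (mut z - nu z) ^+ 2 <= t / 2 * \sum_z (mut z - nu z) ^+ 2.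
      by rewrite ler_pM2l //; lra.
    lra.
  have h3 : (mut z - nu z) ^+ 2 * (4 * K) < 2 * K * d ^+ 2.
    rewrite -htd mulrA (mulrC _ t); by rewrite ltr_pM2r.
  have h4 : (mut z - nu z) ^+ 2 < d ^+ 2 by nra.
  rewrite ltr_norml; apply/andP; split; nra.
pose u := fun z => t * (nu z - mut z).
have hb mu : simplex mu ->
    \sum_z mu z * u z - Rf mu <= \sum_z mut z * u z - Rf mut + eps / 2.
  move=> hmu.
  have s01 : 0 <= s <= 1 by rewrite (ltW s0) s1.
  pose mus := fun z => s * mu z + (1 - s) * mut z.
  have hmus : simplex mus by exact: simplex_comb.
  have hcv := hc mu mut s hmu hmut s01.
  have hmn := hmin mus hmus.
  pose A := \sum_z (mut z - nu z) ^+ 2.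
  pose Bab := \sum_z (mut z - nu z) * (mu z - mut z).
  pose Bb := \sum_z (mu z - mut z) ^+ 2.
  have hexp : \sum_z (mus z - nu z) ^+ 2 = A + 2 * s * Bab + s ^+ 2 * Bb.
    rewrite /A /Bab /Bb !mulr_sumr -!big_split /=; apply: eq_bigr => z _.
    rewrite /mus; ring.
  have hBb : Bb <= 2.
    have -> : 2 = \sum_z (mu z + mut z) by rewrite big_split /= (proj2 hmu) (proj2 hmut).
    apply: ler_sum => z _.
    have := simplex_le1 z hmu; have := simplex_le1 z hmut.
    have := (proj1 hmu) z; have := (proj1 hmut) z; nra.
  have hlin : \sum_z mu z * u z - \sum_z mut z * u z = - (t * Bab).
    rewrite -sumrB /Bab mulr_sumr -sumrN; apply: eq_bigr => z _; rewrite /u; ring.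
  move: hmn; rewrite /phi hexp -/A => hmn.
  have hBb' : t / 2 * (s ^+ 2 * Bb) <= t * s ^+ 2.
    have : 0 <= t / 2 * s ^+ 2 by apply: mulr_ge0; [lra| exact: sqr_ge0].
    nra.
  have key : s * (Rf mut - Rf mu - t * Bab) < s * (t * s + c).
    rewrite /dl in hmn; nra.
  rewrite ltr_pM2l // in key.
  lra.
have hcf : fconj Rf u <= \sum_z mut z * u z - Rf mut + eps / 2.
  exact: (fconj_le (nu0 := mut)).
exists u.
have hd0 : 0 <= \sum_z nu z * u z - \sum_z mut z * u z.
  rewrite -sumrB; apply: sumr_ge0 => z _; rewrite /u -mulrBl mulrCA.
  by apply: mulr_ge0; [lra | rewrite -expr2; exact: sqr_ge0].
lra.
Qed.

End H2.

Section H3.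
Variable R : realType.

Lemma regroup (Y Z : finType) (E : Y -> Z) (p : Y -> R) (g : Z -> R) :
  \sum_y p y * g (E y) = \sum_z (\sum_(y | E y == z) p y) * g z.
Proof.
rewrite (partition_big E xpredT) //=; apply: eq_bigr => z _.
by rewrite mulr_suml; apply: eq_bigr => y /eqP ->.
Qed.

Lemma marginal_simplex (X Y Z : finType) (E : Y -> Z) (pi : X -> Y -> R) x :
  is_policy pi -> simplex (marginal E pi x).
Proof.
move=> hp; have [h0 h1] := hp x; split => [z|].
  by apply: sumr_ge0 => y _; exact: h0.
have := regroup E (pi x) (fun _ => 1); rewrite /marginal.
under eq_bigr do rewrite mulr1.
by under [in RHS]eq_bigr do rewrite mulr1; move=> <-.
Qed.

Lemma term_rewrite (X Y Z : finType) (E : Y -> Z) (pi : X -> Y -> R) x (beta : R) (g : Z -> R) :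
  - (beta * \sum_y pi x y * g (E y)) = \sum_z marginal E pi x z * (- (beta * g z)).
Proof.
rewrite /marginal -(regroup E (pi x) (fun z => - (beta * g z))) /=.
rewrite mulr_sumr -sumrN; apply: eq_bigr => y _; ring.
Qed.


Lemma G_le_J (X Y Z : finType) (rho : X -> R) (E : Y -> Z) (pi0 : X -> Y -> R)
  (beta : R) (Rf : (Z -> R) -> R) (m : R) pi q :
  (forall mu, simplex mu -> m <= Rf mu) -> simplex rho -> is_policy pi ->
  Gobj rho E pi0 beta Rf pi q <= Jobj rho E pi0 beta Rf pi.
Proof.
move=> hm hrho hpi; rewrite /Gobj /Jobj /Ex; apply: ler_sum => x _.
apply: ler_wpM2l; first exact: (proj1 hrho) x.
have := fconj_ge (fun z => -(beta * ln (q x z))) hm (marginal_simplex E x hpi).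
rewrite -(term_rewrite E pi x beta (fun z => ln (q x z))) /Psi /=.
lra.
Qed.


Lemma sum_shift (Z : finType) (mu u : Z -> R) (c : R) : simplex mu ->
  \sum_z mu z * (u z + c) = \sum_z mu z * u z + c.
Proof.
move=> hmu; under eq_bigr do rewrite mulrDr.
by rewrite big_split /= -mulr_suml (proj2 hmu) mul1r.
Qed.

Lemma J_le_G (X Y Z : finType) (rho : X -> R) (E : Y -> Z) (pi0 : X -> Y -> R)
  (beta : R) (Rf : (Z -> R) -> R) (m : R) (z0 : Z) pi (eps : R) :
  0 < beta -> convex_on_simplex Rf -> lsc_on_simplex Rf ->
  (forall mu, simplex mu -> m <= Rf mu) -> simplex rho -> is_policy pi -> 0 < eps ->
  exists q, is_target q /\
    Jobj rho E pi0 beta Rf pi - eps <= Gobj rho E pi0 beta Rf pi q.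
Proof.
move=> b0 hc hl hm hrho hpi e0.
have hu : forall x, exists u : Z -> R, Rf (marginal E pi x) - eps <=
    \sum_z marginal E pi x z * u z - fconj Rf u.
  move=> x; exact: (fm_approx hc hl hm (marginal_simplex E x hpi) e0).
case: (boolp.choice hu) => uf huf.
pose Sx x := \sum_z expR (- uf x z / beta).
have S0 x : 0 < Sx x.
  apply: (lt_le_trans (expR_gt0 (- uf x z0 / beta))).
  by apply: (@le_sum1 _ _ (fun z => expR (- uf x z / beta)) z0) => z; exact: ltW (expR_gt0 _).
pose q x z := expR (- uf x z / beta) / Sx x.
exists q; split.
  move=> x; split => [z|]; first by rewrite /q divr_gt0 ?expR_gt0.
  by rewrite /q -mulr_suml -/(Sx x) mulfV // gt_eqF.
have hlnq x z : -(beta * ln (q x z)) = uf x z + beta * ln (Sx x).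
  rewrite /q ln_div ?posrE ?expR_gt0 // expRK; field; lra.
have hPsi x : Psi Rf beta (q x) <= fconj Rf (uf x) + beta * ln (Sx x).
  rewrite /Psi (_ : (fun z => _) = (fun z => uf x z + beta * ln (Sx x))); last first.
    by apply: boolp.funext => z; exact: hlnq.
  apply: (fconj_le (nu0 := marginal E pi x)); first exact: marginal_simplex.
  move=> mu hmu; have := fconj_ge (uf x) hm hmu.
  rewrite sum_shift //; lra.
rewrite /Gobj /Jobj /Ex.
have -> : \sum_x rho x * (Rf (marginal E pi x) + beta * KL (pi x) (pi0 x)) - eps =
    \sum_x rho x * (Rf (marginal E pi x) + beta * KL (pi x) (pi0 x) - eps).
  under [in RHS]eq_bigr do rewrite mulrBr.
  by rewrite sumrB -mulr_suml (proj2 hrho) mul1r.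
apply: ler_sum => x _; apply: ler_wpM2l; first exact: (proj1 hrho) x.
have h1 := hPsi x; have h2 := huf x.
have h3 := term_rewrite E pi x beta (fun z => ln (q x z)).
have h4 : \sum_z marginal E pi x z * (- (beta * ln (q x z))) =
    \sum_z marginal E pi x z * uf x z + beta * ln (Sx x).
  rewrite -sum_shift; last exact: marginal_simplex.
  by apply: eq_bigr => z _; rewrite hlnq.
simpl in h3; lra.
Qed.

End H3.

Section H4.
Variable R : realType.

Lemma ln_lt (x : R) : 0 < x -> x != 1 -> ln x < x - 1.
Proof.
move=> x0 x1.
have hl : ln x != 0.
  apply: contra x1 => /eqP h.
  by rewrite -(lnK (x:=x)) ?posrE // h expR0.
have := expR_gt1Dx hl; rewrite lnK ?posrE //; lra.
Qed.

Lemma ln_le (x : R) : 0 < x -> ln x <= x - 1.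
Proof.
move=> x0; case: (eqVneq x 1) => [->|x1]; first by rewrite ln1; lra.
exact: ltW (ln_lt x0 x1).
Qed.

Definition kterm (p q : R) := if p == 0 then 0 else p * ln (p / q).

Lemma kterm_ge (p q : R) : 0 <= p -> 0 < q -> p - q <= kterm p q.
Proof.
move=> p0 q0; rewrite /kterm; case: eqP => [->|/eqP pn]; first lra.
have pp : 0 < p by rewrite lt0r pn p0.
have -> : p / q = (q / p)^-1 by rewrite invf_div.
rewrite lnV ?posrE ?divr_gt0 //.
have := ln_le (divr_gt0 q0 pp) => h.
have : p * ln (q / p) <= p * (q / p - 1) by rewrite ler_pM2l.
rewrite mulrBr mulrCA mulfV ?mulr1 //; lra.
Qed.

Lemma kterm_eq (p q : R) : 0 <= p -> 0 < q -> kterm p q = p - q -> p = q.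
Proof.
move=> p0 q0; rewrite /kterm; case: eqP => [->|/eqP pn]; first lra.
have pp : 0 < p by rewrite lt0r pn p0.
case: (eqVneq (q / p) 1) => [e|ne].
  move=> _; have : q = q / p * p by rewrite divfK // gt_eqF.
  by rewrite e mul1r.
have -> : p / q = (q / p)^-1 by rewrite invf_div.
rewrite lnV ?posrE ?divr_gt0 //.
have := ln_lt (divr_gt0 q0 pp) ne => h.
have : p * ln (q / p) < p * (q / p - 1) by rewrite ltr_pM2l.
rewrite mulrBr mulrCA mulfV ?mulr1 //; lra.
Qed.

Lemma KL_kterm (Y : finType) (p q : Y -> R) : KL p q = \sum_y kterm (p y) (q y).
Proof. by []. Qed.

Lemma KL_ge0 (Y : finType) (p q : Y -> R) :
  simplex p -> int_simplex q -> 0 <= KL p q.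
Proof.
move=> [p0 p1] [q0 q1]; rewrite KL_kterm.
have : \sum_y (p y - q y) <= \sum_y kterm (p y) (q y) by apply: ler_sum => y _; exact: kterm_ge.
rewrite sumrB p1 q1 subrr //.
Qed.

Lemma KL_eq0 (Y : finType) (p q : Y -> R) :
  simplex p -> int_simplex q -> KL p q = 0 -> p = q.
Proof.
move=> [p0 p1] [q0 q1]; rewrite KL_kterm => h.
have hs : \sum_y (kterm (p y) (q y) - (p y - q y)) = 0.
  by rewrite sumrB h sumrB p1 q1 subrr subr0.
apply: boolp.funext => y; apply: kterm_eq => //.
have hnn : forall i : Y, true -> 0 <= kterm (p i) (q i) - (p i - q i).
  by move=> i _; rewrite subr_ge0; exact: kterm_ge.
have := psumr_eq0P hnn hs (i := y) isT; lra.
Qed.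


Lemma Cnorm_gt0 (X Y Z : finType) (E : Y -> Z) (pi0 : X -> Y -> R) (q : X -> Z -> R) x :
  is_policy pi0 -> (forall x y, 0 < pi0 x y) -> is_target q -> 0 < Cnorm E pi0 q x.
Proof.
move=> hp hpos hq; have [y _] := simplex_ex (hp x).
apply: (lt_le_trans _ (@le_sum1 _ _ (fun y => pi0 x y * q x (E y)) y _)).
  by rewrite mulr_gt0 //; exact: (proj1 (hq x)).
by move=> w; rewrite mulr_ge0 // ltW //; exact: (proj1 (hq x)).
Qed.

Lemma KL_qtilde (X Y Z : finType) (E : Y -> Z) (pi0 : X -> Y -> R) (q : X -> Z -> R)
  (pi : X -> Y -> R) x :
  is_policy pi0 -> (forall x y, 0 < pi0 x y) -> is_target q -> is_policy pi ->
  KL (pi x) (qtilde E pi0 q x) =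
  KL (pi x) (pi0 x) - \sum_y pi x y * ln (q x (E y)) + ln (Cnorm E pi0 q x).
Proof.
move=> hp hpos hq hpi.
have C0 := Cnorm_gt0 E x hp hpos hq.
have [h0 h1] := hpi x.
rewrite -[ln (Cnorm _ _ _ _)]mul1r -h1 mulr_suml /KL -sumrB -big_split.
apply: eq_bigr => y _ /=.
case: eqP => [->|/eqP pn]; first by rewrite !mul0r subr0 addr0.
have pp : 0 < pi x y by rewrite lt0r pn h0.
have q0 : 0 < q x (E y) by exact: (proj1 (hq x)).
have p00 := hpos x y.
rewrite /qtilde.
have -> : pi x y / (pi0 x y * q x (E y) / Cnorm E pi0 q x) =
    (pi x y / pi0 x y * Cnorm E pi0 q x) / q x (E y).
  by field; rewrite !gt_eqF.
rewrite ln_div ?posrE ?mulr_gt0 ?divr_gt0 ?invr_gt0 //.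
rewrite lnM ?posrE ?divr_gt0 //.
ring.
Qed.

Lemma Gdecomp (X Y Z : finType) (rho : X -> R) (E : Y -> Z) (pi0 : X -> Y -> R)
  (beta : R) (Rf : (Z -> R) -> R) (q : X -> Z -> R) (pi : X -> Y -> R) :
  is_policy pi0 -> (forall x y, 0 < pi0 x y) -> is_target q -> is_policy pi ->
  Gobj rho E pi0 beta Rf pi q =
  beta * Ex rho (fun x => KL (pi x) (qtilde E pi0 q x)) +
  Ex rho (fun x => - (beta * ln (Cnorm E pi0 q x)) - Psi Rf beta (q x)).
Proof.
move=> hp hpos hq hpi.
rewrite /Gobj /Ex mulr_sumr -big_split; apply: eq_bigr => x _ /=.
rewrite KL_qtilde //; ring.
Qed.

End H4.

Unset Implicit Arguments.

Lemma KL_self (R : realType) (Y : finType) (p : Y -> R) : (forall y, 0 < p y) -> KL p p = 0.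
Proof.
move=> hp; rewrite /KL big1 // => y _.
by rewrite gt_eqF // divff ?gt_eqF // ln1 mulr0.
Qed.

Theorem theorem1 (R : realType) (X Y Z : finType) (rho : X -> R) (E : Y -> Z)
  (pi0 : X -> Y -> R) (beta : R) (Rf : (Z -> R) -> R) :
  simplex rho ->
  is_policy pi0 -> (forall x y, 0 < pi0 x y) ->
  0 < beta ->
  convex_on_simplex Rf -> lsc_on_simplex Rf ->
  (* (1) variational representation *)
  ((forall pi : X -> Y -> R, is_policy pi ->
      ((Jobj rho E pi0 beta Rf pi)%:E =
       ereal_sup [set (Gobj rho E pi0 beta Rf pi q)%:E | q in [set q : X -> Z -> R | is_target q]])%E)
   /\
   (forall Pi : set (X -> Y -> R), Pi !=set0 -> Pi `<=` [set p : X -> Y -> R | is_policy p] ->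
      (ereal_inf [set (Jobj rho E pi0 beta Rf pi)%:E | pi in Pi] =
       ereal_inf [set ereal_sup [set (Gobj rho E pi0 beta Rf pi q)%:E
                                  | q in [set q : X -> Z -> R | is_target q]] | pi in Pi])%E))
  /\
  (* (2) best response to a fixed target q *)
  (forall q : X -> Z -> R, is_target q ->
     (exists kappa : R, forall pi : X -> Y -> R, is_policy pi ->
        Gobj rho E pi0 beta Rf pi q =
        beta * Ex rho (fun x => KL (pi x) (qtilde E pi0 q x)) + kappa)
     /\
     let pistar := qtilde E pi0 q in
     is_policy pistar /\
     (forall pi : X -> Y -> R, is_policy pi ->
        Gobj rho E pi0 beta Rf pistar q <= Gobj rho E pi0 beta Rf pi q) /\
     (forall pi : X -> Y -> R, is_policy pi ->
        Gobj rho E pi0 beta Rf pi q = Gobj rho E pi0 beta Rf pistar q ->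
        forall x, 0 < rho x -> pi x = pistar x)).
Proof.
move=> hrho hp0 hpos b0 hc hl.
have [x0 _] := simplex_ex hrho.
have [y0 _] := simplex_ex (hp0 x0).
have [m hm] := lb_conv (E y0) hc.
have P1 : forall pi : X -> Y -> R, is_policy pi ->
    ((Jobj rho E pi0 beta Rf pi)%:E =
     ereal_sup [set (Gobj rho E pi0 beta Rf pi q)%:E | q in [set q : X -> Z -> R | is_target q]])%E.
  move=> pi hpi; apply/eqP; rewrite eq_le; apply/andP; split.
    apply/lee_addgt0Pr => e e0.
    have [q [hq hJ]] := J_le_G E pi0 (E y0) b0 hc hl hm hrho hpi e0.
    apply: (@le_trans _ _ ((Gobj rho E pi0 beta Rf pi q)%:E + e%:E)%E).
      by rewrite -EFinD lee_fin; lra.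
    apply: leeD2r; apply: ereal_sup_ubound; by exists q.
  apply: ge_ereal_sup => _ [q hq <-]; rewrite lee_fin; exact: (G_le_J E pi0 beta q hm hrho hpi).
split.
  split => // Pi _ hsub; congr ereal_inf; apply/seteqP; split => _ [p hpP <-];
    exists p => //; rewrite P1 //; exact: hsub.
move=> q hq.
pose kappa := Ex rho (fun x => - (beta * ln (Cnorm E pi0 q x)) - Psi Rf beta (q x)).
have hdec : forall pi, is_policy pi -> Gobj rho E pi0 beta Rf pi q =
    beta * Ex rho (fun x => KL (pi x) (qtilde E pi0 q x)) + kappa.
  by move=> pi hpi; exact: (Gdecomp rho E beta Rf hp0 hpos hq hpi).
split; first by exists kappa.
move=> pistar.
have hint : forall x, int_simplex (pistar x).
  move=> x; have C0 := Cnorm_gt0 E x hp0 hpos hq; split => [y|].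
    by rewrite /pistar /qtilde divr_gt0 ?mulr_gt0 //; exact: (proj1 (hq x)).
  by rewrite /pistar /qtilde -mulr_suml mulfV // gt_eqF.
have hpol : is_policy pistar by move=> x; split; [move=> y; exact: ltW ((hint x).1 y) | exact: (hint x).2].
have hstar : Gobj rho E pi0 beta Rf pistar q = kappa.
  rewrite hdec // /Ex big1 ?mulr0 ?add0r // => x _.
  by rewrite KL_self ?mulr0 //; exact: (hint x).1.
have hEx0 pi : is_policy pi -> 0 <= Ex rho (fun x => KL (pi x) (qtilde E pi0 q x)).
  move=> hpi; apply: sumr_ge0 => x _; apply: mulr_ge0; first exact: (proj1 hrho).
  exact: KL_ge0.
split=> //; split.
  move=> pi hpi; rewrite hstar hdec //.
  have := hEx0 pi hpi => h; have : 0 <= beta * Ex rho (fun x => KL (pi x) (qtilde E pi0 q x)).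
    by rewrite mulr_ge0 // ltW.
  lra.
move=> pi hpi; rewrite hstar hdec // => heq x rx.
have hz : Ex rho (fun x => KL (pi x) (qtilde E pi0 q x)) = 0.
  have : beta * Ex rho (fun x => KL (pi x) (qtilde E pi0 q x)) = 0 by lra.
  by move/eqP; rewrite mulf_eq0 gt_eqF //= => /eqP.
have hnn : forall i : X, true -> 0 <= rho i * KL (pi i) (qtilde E pi0 q i).
  by move=> i _; apply: mulr_ge0; [exact: (proj1 hrho) | exact: KL_ge0].
have := psumr_eq0P hnn hz (i := x) isT.
move/eqP; rewrite mulf_eq0 gt_eqF //= => /eqP hk.
exact: KL_eq0.
Qed.
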